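(* Let $G=(V,E)$ be a finite simple undirected graph and let $k\ge 0$ be an integer. For each pair of adjacent nodes $r,r'$ of $G$, there exists a maximal $k$-robust partitioning of $G$ in which $r$ and $r'$ lie in the same part.
   Context: A finite simple undirected graph $H$ is $k$-robust if, after removing arbitrary $k$ nodes and their incident edges, the remaining graph is still connected; a clique or a single node is $k$-robust for every $k$. A set $S\subseteq V$ is $k$-robust if the induced subgraph $G[S]$ is $k$-robust. A maximal $k$-robust partitioning of $G$ is a partition of $V$ into nonempty parts such that (1) each node belongs to exactly one part, (2) each part is $k$-robust, and (3) the union of any two or more parts is not $k$-robust. *)

(* Defs.v *)
(* A finite simple undirected graph on a finType T is given by
   a symmetric irreflexive relation e : rel T. *)
From mathcomp Require Import all_boot.
Set Implicit Arguments. Unset Strict Implicit. Unset Printing Implicit Defensive.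

Section Robust.
Variables (T : finType) (e : rel T).

Definition induced_rel (A : {set T}) : rel T :=
  [rel x y | [&& e x y, x \in A & y \in A]].

(* G[A] is connected (the empty graph counts as connected) *)
Definition induced_connected (A : {set T}) : Prop :=
  forall x y, x \in A -> y \in A -> connect (induced_rel A) x y.

Definition is_clique (S : {set T}) : Prop :=
  forall x y, x \in S -> y \in S -> x != y -> e x y.

Definition k_robust (k : nat) (S : {set T}) : Prop :=
  is_clique S \/
  (forall R : {set T}, #|R| <= k -> induced_connected (S :\: R)).

Definition max_robust_partition (k : nat) (P : {set {set T}}) : Prop :=
  [/\ partition P [set: T],
      (forall A, A \in P -> k_robust k A) &
      (forall Q : {set {set T}}, Q \subset P -> 2 <= #|Q| ->
          ~ k_robust k (cover Q))].

End Robust.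

(* Main.v *)
Require Import Defs.
From Stdlib Require Import Classical.
From mathcomp Require Import all_boot zify.
Set Implicit Arguments. Unset Strict Implicit.

Section S.
Variables (T : finType) (e : rel T) (k : nat).

Lemma merge (P Q : {set {set T}}) :
  partition P [set: T] -> (forall A, A \in P -> k_robust e k A) ->
  Q \subset P -> 2 <= #|Q| -> k_robust e k (cover Q) ->
  let P' := cover Q |: (P :\: Q) in
  [/\ partition P' [set: T], (forall A, A \in P' -> k_robust e k A),
      #|P'| < #|P|, cover Q \in P' &
      forall A, A \in P -> A \in P' \/ A \subset cover Q].
Proof.
move=> hP hR sQP hQ rQ P'.
have tP := partition_trivIset hP.
have n0 := partition0 hP.
split.
- have ->: [set: T] = cover Q :|: cover (P :\: Q).
    rewrite -bigcup_setU.
    have ->: Q :|: P :\: Q = P.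
      apply/setP => A; rewrite !inE; case AQ: (A \in Q) => //=.
      by rewrite (subsetP sQP _ AQ).
    by rewrite -/(cover P) (cover_partition hP).
  apply: partitionU1.
  + rewrite /partition eqxx trivIsetD //= inE n0 andbF //.
  + case/card_gt0P: (leq_trans (isT : 0 < 2) hQ) => A AQ.
    have := partition_neq0 hP (subsetP sQP _ AQ).
    case/set0Pn => x xA; apply/set0Pn; exists x; apply/bigcupP; by exists A.
  + apply/bigcup_disjointP => B /setDP [BP BQ].
    rewrite disjoint_sym; apply/bigcup_disjointP => A AQ.
    move/trivIsetP: tP => tP; apply: (tP B A BP (subsetP sQP _ AQ)).
    by apply: contraNneq BQ => ->.
- move=> A /setU1P [-> //|/setDP [AP _]]; exact: hR.
- rewrite cardsU1 cardsDS //.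
  have H2: #|Q| <= #|P| by exact: subset_leq_card.
  move: hQ H2; case: (_ \notin _); rewrite ?add0n ?add1n; move: #|P| #|Q| => p q; lia.
- exact: setU11.
- move=> A AP; case AQ: (A \in Q).
  + right; exact: bigcup_sup.
  + left; rewrite !inE AQ AP orbT //.
Qed.

Lemma step (r r' : T) n : forall P : {set {set T}}, #|P| < n ->
  partition P [set: T] -> (forall A, A \in P -> k_robust e k A) ->
  (exists2 A, A \in P & (r \in A) && (r' \in A)) ->
  exists P : {set {set T}},
    max_robust_partition e k P /\
    exists2 A, A \in P & (r \in A) && (r' \in A).
Proof.
elim: n => [//|n IH] P hn hP hR [A AP hA].
case: (classic (exists Q : {set {set T}},
   [/\ Q \subset P, 2 <= #|Q| & k_robust e k (cover Q)])).
- case=> Q [sQP hQ rQ].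
  case: (merge hP hR sQP hQ rQ) => hP' hR' lt cQ hA'.
  apply: (IH _ _ hP' hR'); first by apply: leq_trans lt _.
  case: (hA' A AP) => [AP'|sA]; first by exists A.
  exists (cover Q) => //; case/andP: hA => h1 h2.
  by rewrite (subsetP sA _ h1) (subsetP sA _ h2).
- move=> nQ; exists P; split; last by exists A.
  split=> // Q sQP hQ rQ; apply: nQ; by exists Q.
Qed.
End S.

Theorem lemma2 (T : finType) (e : rel T)
  (e_sym : symmetric e) (e_irr : irreflexive e) (k : nat) (r r' : T) :
  e r r' ->
  exists P : {set {set T}},
    max_robust_partition e k P /\
    exists2 A, A \in P & (r \in A) && (r' \in A).
Proof.
move=> err.
have nrr : r != r' by apply: contraTneq err => ->; rewrite e_irr.
pose Ps := [set [set x] | x : T].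
have hPs : partition Ps [set: T].
  apply/and3P; split.
  - apply/eqP/setP => z; rewrite inE; apply/bigcupP; exists [set z]; rewrite ?inE //.
    by apply/imsetP; exists z.
  - apply/trivIsetP => _ _ /imsetP[x _ ->] /imsetP[y _ ->] ne.
    rewrite -setI_eq0; apply/eqP/setP => z; rewrite !inE.
    apply/andP => -[/eqP -> /eqP xy]; by rewrite xy eqxx in ne.
  - apply/imsetP => -[x _ /setP /(_ x)]; by rewrite !inE eqxx.
have hRs : forall A, A \in Ps -> k_robust e k A.
  move=> _ /imsetP[x _ ->]; left => y z; rewrite !inE => /eqP -> /eqP ->.
  by rewrite eqxx.
pose Q := [set [set r]; [set r']].
have sQ : Q \subset Ps.
  by apply/subsetP => B; rewrite !inE => /orP[] /eqP ->; apply/imsetP; eexists.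
have hQ : 2 <= #|Q|.
  rewrite cards2; case: eqP => // /set1_inj E; by rewrite E eqxx in nrr.
have cQ : cover Q = [set r; r'].
  by rewrite /cover bigcup_setU !big_set1.
have rQ : k_robust e k (cover Q).
  rewrite cQ; left => x y; rewrite !inE => /orP[] /eqP -> /orP[] /eqP ->;
    rewrite ?eqxx // => _; by rewrite // e_sym.
case: (merge hPs hRs sQ hQ rQ) => hP' hR' _ cQin _.
apply: (@step T e k r r' _ _ (ltnSn _) hP' hR').
exists (cover Q) => //; by rewrite cQ !inE !eqxx orbT.
Qed.
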